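(* Let $D$ be a digraph rooted at $r$ and let $w \in V(D) \setminus \{r\}$. Suppose that $I \in \mathcal{G}_D(w)$ is such that $I \cup \{f\} \in \mathcal{G}_D(w)$ for every $f \in \mathrm{in}_D(w) \setminus I$. Assume that there is an edge $uv \in E(D)$ with $u \neq r$ and $v \neq w$ for which $I \notin \mathcal{G}_{D - uv}(w)$. Then there exist a set $S \subseteq V(D) \setminus \{r\}$ containing $v$ and an $(r,S)$-path-system $\mathcal{P}$ with $V^+(\mathcal{P}) = S$ such that $S$ separates the tails of the edges in $\mathrm{in}_D(v) \setminus \{uv\}$ from $r$ (i.e. every directed path from $r$ to such a tail meets $S$). In particular, $uv$ is the last edge of some $P \in \mathcal{P}$.
   Context: Digraphs have no loops or parallel edges; $D - uv$ is $D$ with the edge $uv$ deleted. $\mathrm{in}_H(w)$ is the set of edges of $H$ with head $w$. An $(r,w)$-path-system is a set of pairwise internally disjoint directed paths from $r$ to $w$; $E^+(\mathcal{P})$ is the set of terminal edges of the paths in $\mathcal{P}$. $\mathcal{G}_H(w)$ is the set of all $I \subseteq \mathrm{in}_H(w)$ for which some $(r,w)$-path-system $\mathcal{P}$ in $H$ has $E^+(\mathcal{P}) = I$. An $(r,S)$-path is a directed path starting at $r$, ending in $S$, and internally disjoint from $S$; an $(r,S)$-path-system is a set of $(r,S)$-paths pairwise disjoint except at $r$. $V^+(\mathcal{P})$ is the set of terminal vertices of the paths in $\mathcal{P}$. *)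

(* Defs.v *)
From mathcomp Require Import all_boot.
Set Implicit Arguments. Unset Strict Implicit. Unset Printing Implicit Defensive.

Section Digraphs.
Variable V : finType.

(* A digraph on vertex set V is an irreflexive relation e (no loops); edges are
   pairs (x,y) with e x y, so there are no parallel edges. *)
Definition loopless (e : rel V) := forall x, ~~ e x x.

Definition edges (e : rel V) : {set V * V} := [set f | e f.1 f.2].

Definition in_edges (e : rel V) (w : V) : {set V * V} :=
  [set f | e f.1 f.2 && (f.2 == w)].

Definition del_edge (e : rel V) (u v : V) : rel V :=
  fun x y => e x y && ((x, y) != (u, v)).

(* A directed path from x is represented by the list p of its vertices after x;
   the full vertex sequence is x :: p. *)
Definition dpath (e : rel V) (x y : V) (p : seq V) : bool :=
  [&& path e x p, uniq (x :: p) & last x p == y].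

Definition interior (x : V) (p : seq V) : seq V := behead (belast x p).

(* last edge of the path x :: p (meaningful when p is nonempty) *)
Definition term_edge (x : V) (p : seq V) : V * V :=
  (last x (belast x p), last x p).

Definition rw_path_system (e : rel V) (r w : V) (Ps : seq (seq V)) : Prop :=
  [/\ uniq Ps,
      forall p, p \in Ps -> dpath e r w p &
      forall p q, p \in Ps -> q \in Ps -> p != q ->
        [disjoint interior r p & interior r q]].

Definition Eplus (r : V) (Ps : seq (seq V)) : {set V * V} :=
  [set f | f \in map (term_edge r) Ps].

Definition Vplus (r : V) (Ps : seq (seq V)) : {set V} :=
  [set x | x \in map (last r) Ps].

Definition in_G (e : rel V) (r w : V) (I : {set V * V}) : Prop :=
  I \subset in_edges e w /\
  exists Ps, rw_path_system e r w Ps /\ Eplus r Ps = I.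

Definition rS_path (e : rel V) (r : V) (S : {set V}) (p : seq V) : Prop :=
  [/\ dpath e r (last r p) p, last r p \in S &
      [disjoint interior r p & S]].

(* (r,S)-path-system: (r,S)-paths pairwise disjoint except at r *)
Definition rS_path_system (e : rel V) (r : V) (S : {set V}) (Ps : seq (seq V)) : Prop :=
  [/\ uniq Ps,
      forall p, p \in Ps -> rS_path e r S p &
      forall p q, p \in Ps -> q \in Ps -> p != q -> [disjoint p & q]].

Definition separates (e : rel V) (r : V) (S : {set V}) (t : V) : Prop :=
  forall p, dpath e r t p -> has (mem S) (r :: p).

End Digraphs.

(* Main.v *)
Require Import Defs.
From mathcomp Require Import all_boot.
From mathcomp Require Import zify.
From Stdlib Require Import Classical.
Set Implicit Arguments. Unset Strict Implicit. Unset Printing Implicit Defensive.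

Module A.
Section Aux.
Variable V : finType.
Implicit Types (e g : rel V) (s t p q : seq V).

Lemma disjP (A B : {pred V}) :
  reflect (forall x, x \in A -> x \in B -> False) [disjoint A & B].
Proof.
apply: (iffP idP) => [H x xa xb | H].
  by rewrite (disjointFr H xa) in xb.
rewrite disjoint_subset; apply/subsetP => x xa; rewrite inE /=.
by apply/negP => xb; exact: H x xa xb.
Qed.

Lemma test (s t : seq V) (S : {set V}) : [disjoint s & t] -> [disjoint s & S] -> True.
Proof. move=> /disjP H /disjP H2. done. Qed.

Definition wk g s := if s is h :: t then path g h t else true.
Definition wAB g (A B : {set V}) s :=
  if s is h :: t then [&& h \in A, path g h t & last h t \in B] else false.
Definition sepAB g (A B Z : {set V}) := forall s, wAB g A B s -> has (mem Z) s.
Definition Fam (Ps : seq (seq V)) :=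
  uniq Ps /\ forall s t, s \in Ps -> t \in Ps -> s != t -> [disjoint s & t].

Lemma split_first (P : pred V) s : has P s ->
  exists s1 z s2, [/\ s = s1 ++ z :: s2, P z & ~~ has P s1].
Proof.
elim: s => //= a s IH; case: (boolP (P a)) => Pa /=.
  by move=> _; exists [::], a, s.
move=> /IH [s1 [z [s2 [-> Pz Hs1]]]]; exists (a :: s1), z, s2.
by rewrite /= (negbTE Pa).
Qed.

Fixpoint tr1 (P : pred V) s :=
  if s is a :: s' then (if P a then [:: a] else a :: tr1 P s') else [::].

Lemma tr1P (P : pred V) s : has P s ->
  exists s1 z s2, [/\ s = s1 ++ z :: s2, P z, ~~ has P s1 & tr1 P s = rcons s1 z].
Proof.
elim: s => //= a s IH; case: (boolP (P a)) => Pa /=.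
  by move=> _; exists [::], a, s.
move=> /IH [s1 [z [s2 [-> Pz Hs1 ->]]]]; exists (a :: s1), z, s2.
by rewrite /= (negbTE Pa).
Qed.

Fixpoint tr2 (P : pred V) s :=
  if s is a :: s' then (if has P s' then tr2 P s' else if P a then s else [::])
  else [::].

Lemma tr2P (P : pred V) s : has P s ->
  exists s1 z s2, [/\ s = s1 ++ z :: s2, P z, ~~ has P s2 & tr2 P s = z :: s2].
Proof.
elim: s => //= a s IH; case: (boolP (has P s)) => Hs /=.
  move=> _; have [s1 [z [s2 [-> Pz Hs2 ->]]]] := IH Hs.
  by exists (a :: s1), z, s2.
rewrite orbF => Pa; rewrite Pa; by exists [::], a, s.
Qed.

Lemma mem_split x s : x \in s -> exists s1 s2, s = s1 ++ x :: s2.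
Proof. by case/splitPr => s1 s2; exists s1, s2. Qed.

Lemma wk_cat g s1 z s2 : wk g (s1 ++ z :: s2) = wk g (rcons s1 z) && path g z s2.
Proof.
case: s1 => [|h t] /=; first by [].
by rewrite cat_path rcons_path /= andbA.
Qed.

Lemma path_del_or g x y h t : path g h t ->
  path (del_edge g x y) h t \/ exists s1 s2, h :: t = s1 ++ x :: y :: s2.
Proof.
elim: t h => [|a t IH] h /=; first by left.
move=> /andP[gha pt]; case: (IH a pt) => [p'|[s1 [s2 E]]].
  case: (eqVneq (h, a) (x, y)) => [[-> ->]|ne].
    by right; exists [::], t.
  by left; rewrite /del_edge gha ne p'.
by right; exists (h :: s1), s2; rewrite E.
Qed.

Lemma path_del_notin g x y h t : path g h t -> x \notin belast h t ->
  path (del_edge g x y) h t.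
Proof.
elim: t h => [|a t IH] h //=; move=> /andP[gha pt].
rewrite inE negb_or => /andP[xh xt].
rewrite /del_edge gha xpair_eqE eq_sym (negbTE xh) /=.
exact: IH.
Qed.

Lemma path_del_notin2 g x y h t : path g h t -> y \notin t ->
  path (del_edge g x y) h t.
Proof.
elim: t h => [|a t IH] h //=; move=> /andP[gha pt].
rewrite inE negb_or => /andP[ya yt].
rewrite /del_edge gha xpair_eqE [a == y]eq_sym (negbTE ya) andbF /=.
exact: IH.
Qed.

Lemma wk_del1 g x y s1 z : wk g (rcons s1 z) -> x \notin s1 ->
  wk (del_edge g x y) (rcons s1 z).
Proof.
case: s1 => [|h t] //= H Hx; apply: path_del_notin => //.
by rewrite belast_rcons.
Qed.

Lemma wAB_prefix g g' (A B C : {set V}) s1 z s2 : wAB g A B (s1 ++ z :: s2) ->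
  wk g' (rcons s1 z) -> z \in C -> wAB g' A C (rcons s1 z).
Proof.
case: s1 => [|h t] /=; first by case/and3P => -> _ _ _ ->.
by case/and3P => -> _ _ -> zC; rewrite last_rcons zC.
Qed.

Lemma wAB_suffix g g' (A B C : {set V}) s1 z s2 : wAB g A B (s1 ++ z :: s2) ->
  path g' z s2 -> z \in C -> wAB g' C B (z :: s2).
Proof.
case: s1 => [|h t] /=; first by case/and3P => _ _ -> -> ->.
by case/and3P => _ _; rewrite last_cat /= => -> -> ->.
Qed.

Lemma wAB_wk g (A B : {set V}) s : wAB g A B s -> wk g s.
Proof. by case: s => //= h t /and3P[]. Qed.

Lemma wAB_sub g g' (A B : {set V}) s : subrel g g' -> wAB g A B s -> wAB g' A B s.
Proof.
move=> H; case: s => //= h t /and3P[-> p ->]; by rewrite (sub_path H p).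
Qed.

Lemma wAB_glue g (A B C D : {set V}) sa c sb ta tb : wAB g A C (sa ++ c :: sb) ->
  wAB g D B (ta ++ c :: tb) -> wAB g A B (sa ++ c :: tb).
Proof.
move=> H1 H2.
have w1 := wAB_wk H1; have w2 := wAB_wk H2.
rewrite wk_cat in w1; rewrite wk_cat in w2.
case/andP: w1 => w1 _; case/andP: w2 => _ w2.
move: H1 H2; case: sa w1 => [|h t] w1 /=.
  case/and3P => -> _ _; case: ta w2 => [|h' t'] w2 /=.
    by case/and3P => _ -> ->.
  by case/and3P => _ _; rewrite last_cat /= => ->; rewrite w2.
case/and3P => -> _ _; case: ta w2 => [|h' t'] w2 /=.
  case/and3P => _ _; rewrite last_cat /= cat_path /= => Hl.
  by move: w1; rewrite /= rcons_path => /andP[-> ->]; rewrite w2 Hl.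
case/and3P => _ _; rewrite !last_cat /= => ->.
by move: w1; rewrite /= cat_path rcons_path /= => /andP[-> ->]; rewrite w2.
Qed.


Lemma hasZP (Z : {set V}) s : reflect (exists2 x, x \in s & x \in Z) (has (mem Z) s).
Proof. exact: hasP. Qed.

Lemma tr1_sub (P : pred V) s : has P s -> tr1 P s != [::] /\ {subset tr1 P s <= s}.
Proof.
move=> /tr1P [s1 [z [s2 [-> _ _ ->]]]]; split; first by case: s1.
by move=> x; rewrite mem_rcons mem_cat !inE => /orP[->|->]; rewrite ?orbT.
Qed.

Lemma tr2_sub (P : pred V) s : has P s -> tr2 P s != [::] /\ {subset tr2 P s <= s}.
Proof.
move=> /tr2P [s1 [z [s2 [-> _ _ ->]]]]; split => // x xs.
by rewrite mem_cat xs orbT.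
Qed.

Lemma rcons_prefix_sub s1 z sa c sb : rcons s1 z = sa ++ c :: sb -> {subset sa <= s1}.
Proof.
elim: sa s1 => [|a sa IH] s1 //= E x.
case: s1 E => [|b s1] /=.
  by case => _; case: sa IH.
case => -> E; rewrite !inE => /orP[->//|xs]; by rewrite (IH _ E x xs) orbT.
Qed.

Lemma cons_suffix_sub z t2 ta c tb : z :: t2 = ta ++ c :: tb -> {subset tb <= t2}.
Proof.
case: ta => [|a ta] /= [_ ->] x xt //.
by rewrite mem_cat inE xt !orbT.
Qed.

Lemma wAB_join_edge g (A B C D : {set V}) s1 x y t :
  wAB g A C (rcons s1 x) -> wAB g D B (y :: t) -> g x y ->
  wAB g A B (rcons s1 x ++ y :: t).
Proof.
case: s1 => [|h s1] /=.
  by case/andP => -> _ /and3P[_ -> ->] ->.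
case/and3P => -> p _ /and3P[_ pt lt] gxy.
by rewrite cat_path last_cat last_rcons /= p lt /= gxy pt.
Qed.

End Aux.

End A.
Import A.

Module B.
Section Fams.
Variable V : finType.
Implicit Types (e g : rel V) (s t p q : seq V) (Ps : seq (seq V)).

Lemma Fam_map (f : seq V -> seq V) Ps : Fam Ps ->
  (forall s, s \in Ps -> f s != [::] /\ {subset f s <= s}) -> Fam (map f Ps).
Proof.
move=> [HU HD] Hf; split.
  rewrite map_inj_in_uniq // => s t sP tP Est; apply/eqP/negPn/negP => nst.
  have [fs0 fsub] := Hf s sP; have [_ ftsub] := Hf t tP.
  case Efs: (f s) fs0 => [|a l] // _.
  have as' : a \in f s by rewrite Efs inE eqxx.
  have at' : a \in f t by rewrite -Est.
  exact: (disjP _ _ (HD s t sP tP nst)) a (fsub a as') (ftsub a at').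
move=> s' t' /mapP[s sP ->] /mapP[t tP ->] nst.
have nst' : s != t by apply: contraNneq nst => ->.
apply/disjP => a as' at'.
have [_ fsub] := Hf s sP; have [_ ftsub] := Hf t tP.
exact: (disjP _ _ (HD s t sP tP nst')) a (fsub a as') (ftsub a at').
Qed.

Lemma Fam_filter (P : pred (seq V)) Ps : Fam Ps -> Fam (filter P Ps).
Proof.
move=> [HU HD]; split; first exact: filter_uniq.
move=> s t; rewrite !mem_filter => /andP[_ sP] /andP[_ tP]; exact: HD.
Qed.

Lemma Fam_cons s Ps : Fam (s :: Ps) -> Fam Ps.
Proof.
move=> [/andP[_ HU] HD]; split => // a b aP bP; apply: HD; by rewrite inE ?aP ?bP orbT.
Qed.

Lemma Fam_uniq_map (f : seq V -> V) Ps : Fam Ps ->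
  (forall s, s \in Ps -> f s \in s) -> uniq (map f Ps).
Proof.
move=> [HU HD] Hf; rewrite map_inj_in_uniq // => s t sP tP Est.
apply/eqP/negPn/negP => nst.
have := Hf t tP; rewrite -Est => ft.
exact: (disjP _ _ (HD s t sP tP nst)) (f s) (Hf s sP) ft.
Qed.

Lemma Fam_hit Ps (Z : {set V}) : Fam Ps -> (forall s, s \in Ps -> has (mem Z) s) ->
  size Ps <= #|Z|.
Proof.
elim: Ps Z => [|s Ps IH] Z //= HF Hh.
have /hasP [z zs zZ] := Hh s (mem_head _ _).
have HF' := Fam_cons HF.
have : size Ps <= #|Z :\ z|.
  apply: IH => // t tP; have tP' : t \in s :: Ps by rewrite inE tP orbT.
  have /hasP [y yt yZ] := Hh t tP'.
  have yZ' : y \in Z := yZ.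
  apply/hasP; exists y => //; rewrite !inE yZ' andbT.
  apply/eqP => Eyz; subst y.
  case: HF => /andP[sPs _] HD.
  have nst : s != t by apply: contraNneq sPs => ->.
  exact: (disjP _ _ (HD s t (mem_head _ _) tP' nst)) z zs yt.
have zZ' : z \in Z := zZ.
by rewrite (cardsD1 z Z) zZ'.
Qed.

Lemma cover_seq (l : seq V) (A : {set V}) : uniq l -> {subset l <= A} -> #|A| <= size l ->
  {subset A <= l}.
Proof.
move=> Hu Hs Hc x xA.
have Hs' : {subset l <= enum A} by move=> y yl; rewrite mem_enum; apply: Hs.
have Hc' : size (enum A) <= size l by rewrite -cardE.
have [_ Heq] := uniq_min_size Hu Hs' Hc'.
by rewrite Heq mem_enum.
Qed.

Lemma Fam_of_fun (T : eqType) (f : T -> seq V) (l : seq T) : uniq l ->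
  (forall a b, a \in l -> b \in l -> a != b -> [disjoint f a & f b]) ->
  (forall a, a \in l -> f a != [::]) -> Fam (map f l).
Proof.
move=> Hu HD Hne; split.
  rewrite map_inj_in_uniq // => a b al bl Efab; apply/eqP/negPn/negP => nab.
  have := Hne a al; case Efa: (f a) => [|x r] // _.
  have xa : x \in f a by rewrite Efa inE eqxx.
  have xb : x \in f b by rewrite -Efab.
  exact: (disjP _ _ (HD a b al bl nab)) x xa xb.
move=> s t /mapP[a al ->] /mapP[b bl ->] nst; apply: HD => //.
by apply: contraNneq nst => ->.
Qed.

End Fams.

End B.
Import B.

Module C.
Section Menger.
Variable V : finType.
Implicit Types (e g : rel V) (s t p q : seq V) (Ps : seq (seq V)).

Lemma menger_base e (A B : {set V}) k : (forall a b, ~~ e a b) ->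
  (forall Z, sepAB e A B Z -> k <= #|Z|) ->
  exists Ps, [/\ size Ps = k, Fam Ps & forall s, s \in Ps -> wAB e A B s].
Proof.
move=> He Hsep.
have Hk : k <= #|A :&: B|.
  apply: Hsep => [[|h [|a t]]] //=.
    by case/andP => hA hB; rewrite inE hA hB.
  by case/and3P => _ /andP[eha _]; rewrite (negbTE (He h a)) in eha.
exists (map (fun a => [:: a]) (take k (enum (A :&: B)))); split.
- by rewrite size_map size_takel // -cardE.
- apply: Fam_of_fun => //; first by apply: take_uniq; exact: enum_uniq.
  move=> a b _ _ nab; apply/disjP => x; rewrite !inE => /eqP -> /eqP Eab.
  by rewrite Eab eqxx in nab.
- move=> s /mapP[a /mem_take]; rewrite mem_enum inE => /andP[aA aB] ->.
  by rewrite /= aA aB.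
Qed.


Lemma menger_step e x0 y0 (A B Y : {set V}) k :
  e x0 y0 ->
  (forall Z, sepAB e A B Z -> k <= #|Z|) ->
  sepAB (del_edge e x0 y0) A B Y -> #|Y| < k ->
  (forall (A' B' : {set V}) k',
     (forall Z, sepAB (del_edge e x0 y0) A' B' Z -> k' <= #|Z|) ->
     exists Ps, [/\ size Ps = k', Fam Ps &
                    forall s, s \in Ps -> wAB (del_edge e x0 y0) A' B' s]) ->
  exists Ps, [/\ size Ps = k, Fam Ps & forall s, s \in Ps -> wAB e A B s].
Proof.
move=> exy Hsep HY HYk IH.
set e' := del_edge e x0 y0.
have sube : subrel e' e by move=> a b /andP[].
set Yx := x0 |: Y; set Yy := y0 |: Y.
have sepXY : sepAB e A B Yx /\ sepAB e A B Yy.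
  split => -[|h t] // Hw; case/and3P: (Hw) => hA pt hB;
  (case: (path_del_or x0 y0 pt) => [pt'|[s1 [s2 E]]];
   [have : has (mem Y) (h :: t) by apply: HY; rewrite /= hA pt' hB
   | ]).
  - case/hasZP => z zs zY; apply/hasZP; exists z => //; by rewrite !inE zY orbT.
  - apply/hasZP; exists x0; by rewrite ?E ?mem_cat ?inE ?eqxx ?orbT.
  - case/hasZP => z zs zY; apply/hasZP; exists z => //; by rewrite !inE zY orbT.
  - apply/hasZP; exists y0; by rewrite ?E ?mem_cat ?inE ?eqxx ?orbT.
case: sepXY => sepX sepY.
have := Hsep _ sepX; have := Hsep _ sepY; rewrite !cardsU1.
case x0Y: (x0 \in Y); case y0Y: (y0 \in Y) => /=; try lia.
move=> Hy Hx; have cX : #|Yx| = k by rewrite cardsU1 x0Y /=; lia.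
have cY : #|Yy| = k by rewrite cardsU1 y0Y /=; lia.
have sepX' : forall Z, sepAB e' A Yx Z -> k <= #|Z|.
  move=> Z HZ; apply: Hsep => s Hs.
  have [s1 [z [s2 [Es zY Hs1]]]] := split_first (sepX s Hs).
  have Hw : wAB e' A Yx (rcons s1 z).
    apply: (wAB_prefix (g:=e) (B:=B) (s2:=s2)); [by rewrite -Es | | exact zY].
    apply: wk_del1; first by have := wAB_wk Hs; rewrite Es wk_cat => /andP[].
    apply: contra Hs1 => x0s1; apply/hasZP; exists x0 => //; by rewrite !inE eqxx.
  have /hasZP [c cs cZ] := HZ _ Hw; apply/hasZP; exists c => //.
  move: cs; rewrite mem_rcons Es mem_cat !inE.
  by case/orP => ->; rewrite ?orbT.
have sepY' : forall Z, sepAB e' Yy B Z -> k <= #|Z|.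
  move=> Z HZ; apply: Hsep => s Hs.
  have [s1 [z [s2 [Es zY Hs2 _]]]] := tr2P (sepY s Hs).
  have Hw : wAB e' Yy B (z :: s2).
    apply: (wAB_suffix (g:=e) (A:=A) (s1:=s1)); [by rewrite -Es | | exact zY].
    apply: path_del_notin2; first by have := wAB_wk Hs; rewrite Es wk_cat => /andP[].
    apply: contra Hs2 => y0s2; apply/hasZP; exists y0 => //; by rewrite !inE eqxx.
  have /hasZP [c cs cZ] := HZ _ Hw; apply/hasZP; exists c => //.
  by rewrite Es mem_cat cs orbT.
have [Ps1 [sz1 F1 W1]] := IH _ _ _ sepX'.
have [Ps2 [sz2 F2 W2]] := IH _ _ _ sepY'.
have hasP1 : forall s, s \in Ps1 -> has (mem Yx) s.
  move=> [|h t] sP; first by have := W1 _ sP.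
  case/and3P: (W1 _ sP) => _ _ hl; apply/hasZP; exists (last h t) => //.
  exact: mem_last.
have hasP2 : forall s, s \in Ps2 -> has (mem Yy) s.
  move=> [|h t] sP; first by have := W2 _ sP.
  case/and3P: (W2 _ sP) => hl _ _; apply/hasZP; exists h => //.
  exact: mem_head.
set P1 := map (tr1 (mem Yx)) Ps1.
set P2 := map (tr2 (mem Yy)) Ps2.
have FP1 : Fam P1 by apply: Fam_map F1 _ => s sP; exact: tr1_sub (hasP1 s sP).
have FP2 : Fam P2 by apply: Fam_map F2 _ => s sP; exact: tr2_sub (hasP2 s sP).
have P1sh : forall s, s \in P1 -> exists s1 z,
    [/\ s = rcons s1 z, z \in Yx, ~~ has (mem Yx) s1 & wAB e' A Yx s].
  move=> s /mapP[s0 s0P ->].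
  have [s1 [z [s2 [E zY H1 ->]]]] := tr1P (hasP1 s0 s0P).
  exists s1, z; split => //.
  apply: (wAB_prefix (g:=e') (B:=Yx) (s2:=s2)); [by rewrite -E; apply: W1 | | exact zY].
  by have := wAB_wk (W1 s0 s0P); rewrite E wk_cat => /andP[].
have P2sh : forall t, t \in P2 -> exists z t2,
    [/\ t = z :: t2, z \in Yy, ~~ has (mem Yy) t2 & wAB e' Yy B t].
  move=> s /mapP[s0 s0P ->].
  have [s1 [z [s2 [E zY H2 ->]]]] := tr2P (hasP2 s0 s0P).
  exists z, s2; split => //.
  apply: (wAB_suffix (g:=e') (A:=Yy) (s1:=s1)); [by rewrite -E; apply: W2 | | exact zY].
  by have := wAB_wk (W2 s0 s0P); rewrite E wk_cat => /andP[].
have HC : forall s t c, s \in P1 -> t \in P2 -> c \in s -> c \in t ->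
    [/\ c \in Y, c = last x0 s & c = head x0 t].
  move=> s t c sP tP cs ct.
  have [s1 [z [Es zY Hs1 ws]]] := P1sh s sP.
  have [z' [t2 [Et zY' Ht2 wt]]] := P2sh t tP.
  have [sa [sb Es']] := mem_split cs; have [ta [tb Et']] := mem_split ct.
  have Hw : wAB e' A B (sa ++ c :: tb).
    rewrite Es' in ws; rewrite Et' in wt; exact: wAB_glue ws wt.
  have cinY : c \in Y.
    have /hasZP [d dW dY] := HY _ Hw.
    move: dW; rewrite mem_cat inE => /orP[dsa | /orP[/eqP <- // | dtb]].
    - have ds1 := rcons_prefix_sub (etrans (esym Es) Es') dsa.
      case/negP: Hs1; apply/hasZP; exists d => //; by rewrite !inE dY orbT.
    - have dt2 := cons_suffix_sub (etrans (esym Et) Et') dtb.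
      case/negP: Ht2; apply/hasZP; exists d => //; by rewrite !inE dY orbT.
  split => //.
  - move: cs; rewrite Es mem_rcons inE last_rcons => /orP[/eqP -> // | cs1].
    case/negP: Hs1; apply/hasZP; exists c => //; by rewrite !inE cinY orbT.
  - move: ct; rewrite Et inE /= => /orP[/eqP -> // | ct2].
    case/negP: Ht2; apply/hasZP; exists c => //; by rewrite !inE cinY orbT.
have lastP1 : forall z, z \in Yx -> exists2 s, s \in P1 & last x0 s = z.
  move=> z zY.
  have Hu : uniq (map (last x0) P1).
    apply: Fam_uniq_map FP1 _ => s sP; have [s1 [z' [-> _ _ _]]] := P1sh s sP.
    by rewrite last_rcons mem_rcons mem_head.
  have Hsub : {subset map (last x0) P1 <= Yx}.
    move=> y /mapP[s sP ->]; have [s1 [z' [-> zY' _ _]]] := P1sh s sP.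
    by rewrite last_rcons.
  have Hc : #|Yx| <= size (map (last x0) P1) by rewrite !size_map sz1 cX.
  by have /mapP[s sP ->] := cover_seq Hu Hsub Hc zY; exists s.
have headP2 : forall z, z \in Yy -> exists2 s, s \in P2 & head x0 s = z.
  move=> z zY.
  have Hu : uniq (map (head x0) P2).
    apply: Fam_uniq_map FP2 _ => s sP; have [z' [t2 [-> _ _ _]]] := P2sh s sP.
    by rewrite mem_head.
  have Hsub : {subset map (head x0) P2 <= Yy}.
    move=> y /mapP[s sP ->]; have [z' [t2 [-> zY' _ _]]] := P2sh s sP.
    by [].
  have Hc : #|Yy| <= size (map (head x0) P2) by rewrite !size_map sz2 cY.
  by have /mapP[s sP ->] := cover_seq Hu Hsub Hc zY; exists s.
pose P z := nth [::] P1 (find (fun s => last x0 s == z) P1).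
pose Q z := nth [::] P2 (find (fun s => head x0 s == z) P2).
have PP : forall z, z \in Yx -> P z \in P1 /\ last x0 (P z) = z.
  move=> z zY; have [s sP sl] := lastP1 z zY.
  have Hh : has (fun s => last x0 s == z) P1 by apply/hasP; exists s => //; apply/eqP.
  split; first by rewrite /P mem_nth // -has_find.
  by apply/eqP; exact: (nth_find [::] Hh).
have QQ : forall z, z \in Yy -> Q z \in P2 /\ head x0 (Q z) = z.
  move=> z zY; have [s sP sl] := headP2 z zY.
  have Hh : has (fun s => head x0 s == z) P2 by apply/hasP; exists s => //; apply/eqP.
  split; first by rewrite /Q mem_nth // -has_find.
  by apply/eqP; exact: (nth_find [::] Hh).
pose zs z := if z == x0 then y0 else z.
have zsY : forall z, z \in Yx -> zs z \in Yy.
  move=> z; rewrite /zs !inE; case: (z =P x0) => [_ _|_ /= zY]; by rewrite ?eqxx ?zY ?orbT.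
have zsYY : forall z, z \in Yx -> zs z \in Y -> zs z = z /\ z \in Y.
  move=> z; rewrite /zs; case: (z =P x0) => [_ _|_ _ zY //]; by rewrite y0Y.
have Yx_Y : forall a, a \in Yx -> a != x0 -> a \in Y.
  by move=> a; rewrite !inE => /orP[/eqP->|//]; rewrite eqxx.
have zs_inj : {in Yx &, injective zs}.
  move=> a b aY bY; rewrite /zs.
  case: (a =P x0) => [->|na]; case: (b =P x0) => [->|nb] //.
  - move=> Eb; have := Yx_Y b bY (introN eqP nb); by rewrite -Eb y0Y.
  - move=> Ea; have := Yx_Y a aY (introN eqP na); by rewrite Ea y0Y.
pose W z := if z == x0 then P x0 ++ Q y0 else P z ++ behead (Q z).
have Wsub : forall z c, c \in W z -> c \in P z \/ c \in Q (zs z).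
  move=> z c; rewrite /W /zs; case: (z =P x0) => [->|_]; rewrite mem_cat => /orP[]; auto.
  by move/mem_behead; auto.
have Wne : forall z, z \in Yx -> W z != [::].
  move=> z zY; have [Pz _] := PP z zY; have [s1 [z' [E _ _ _]]] := P1sh _ Pz.
  by rewrite /W; case: (z =P x0) => [<-|_]; rewrite E; case: s1 {E}.
have WAB : forall z, z \in Yx -> wAB e A B (W z).
  move=> z zY; have [Pz Pl] := PP z zY; have [s1 [z' [E _ _ wP]]] := P1sh _ Pz.
  have [Qz Qh] := QQ _ (zsY z zY); have [z'' [t2 [E2 _ _ wQ]]] := P2sh _ Qz.
  move: Pl Qh; rewrite E E2 last_rcons /= => Ez' Ez''; subst z'.
  rewrite /W; case: (z =P x0) => [Ez | nz].
    subst z; rewrite /zs eqxx in E2 Ez'' wQ; subst z''.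
    rewrite E in wP; rewrite E E2; rewrite E2 in wQ.
    exact: wAB_join_edge (wAB_sub sube wP) (wAB_sub sube wQ) exy.
  have zsz : zs z = z by rewrite /zs; case: (z =P x0).
  rewrite zsz in E2 Ez'' wQ; subst z''.
  rewrite E E2 /= cat_rcons; apply: wAB_sub sube _.
  rewrite E -cats1 in wP; rewrite E2 -[z :: t2]cat0s in wQ.
  exact: wAB_glue wP wQ.
exists (map W (enum Yx)); split.
- by rewrite size_map -cardE cX.
- apply: Fam_of_fun; first exact: enum_uniq.
  + move=> z z'; rewrite !mem_enum => zY z'Y nz; apply/disjP => c cz cz'.
    have [Pz Pl] := PP z zY; have [Pz' Pl'] := PP z' z'Y.
    have [Qz Qh] := QQ _ (zsY z zY); have [Qz' Qh'] := QQ _ (zsY z' z'Y).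
    case: (Wsub z c cz) => [cP|cQ]; case: (Wsub z' c cz') => [cP'|cQ'].
    * have nP : P z != P z' by apply: contraNneq nz => E; rewrite -Pl -Pl' E.
      exact: (disjP _ _ (FP1.2 _ _ Pz Pz' nP)) c cP cP'.
    * have [cY0 E1 E2] := HC _ _ c Pz Qz' cP cQ'.
      rewrite Pl in E1; rewrite Qh' in E2.
      have zsY' : zs z' \in Y by rewrite -E2.
      have [E3 _] := zsYY z' z'Y zsY'.
      by move: nz; rewrite -E1 E2 E3 eqxx.
    * have [cY0 E1 E2] := HC _ _ c Pz' Qz cP' cQ.
      rewrite Pl' in E1; rewrite Qh in E2.
      have zsY' : zs z \in Y by rewrite -E2.
      have [E3 _] := zsYY z zY zsY'.
      by move: nz; rewrite -E3 -E2 E1 eqxx.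
    * have nQ : Q (zs z) != Q (zs z').
        apply: contraNneq nz => E; move: Qh Qh'; rewrite E => -> Ezz.
        by apply/eqP; apply: zs_inj.
      exact: (disjP _ _ (FP2.2 _ _ Qz Qz' nQ)) c cQ cQ'.
  + by move=> z; rewrite mem_enum; apply: Wne.
- by move=> s /mapP[z]; rewrite mem_enum => zY ->; apply: WAB.
Qed.


Lemma edges_del e x y : e x y -> #|edges (del_edge e x y)| < #|edges e|.
Proof.
move=> exy; apply: proper_card; apply/properP; split.
  by apply/subsetP => f; rewrite !inE /del_edge => /andP[].
by exists (x, y); rewrite !inE /del_edge //= exy eqxx.
Qed.

Lemma menger_n n : forall e (A B : {set V}) k, #|edges e| <= n ->
  (forall Z, sepAB e A B Z -> k <= #|Z|) ->
  exists Ps, [/\ size Ps = k, Fam Ps & forall s, s \in Ps -> wAB e A B s].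
Proof.
elim: n => [|n IH] e A B k He Hsep.
  apply: menger_base Hsep => a b; apply/negP => eab.
  have : (a, b) \in edges e by rewrite inE.
  by move: He; rewrite leqn0 => /eqP/cards0_eq ->; rewrite inE.
case: (leqP #|edges e| n) => [Hn|Hn]; first exact: IH Hn Hsep.
have [[x0 y0]] : exists f, f \in edges e.
  by apply/set0Pn; rewrite -card_gt0; apply: leq_ltn_trans Hn.
rewrite inE /= => exy.
have He' : #|edges (del_edge e x0 y0)| <= n.
  by have := edges_del exy; lia.
case: (classic (exists Y, sepAB (del_edge e x0 y0) A B Y /\ #|Y| < k))
  => [[Y [HY HYk]]|HnY].
  apply: menger_step exy Hsep HY HYk _ => A' B' k' H'; exact: IH He' H'.
have [Ps [sz F W]] : exists Ps, [/\ size Ps = k, Fam Ps &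
    forall s, s \in Ps -> wAB (del_edge e x0 y0) A B s].
  apply: IH He' _ => Z HZ; rewrite leqNgt; apply/negP => HZk; apply: HnY.
  by exists Z.
exists Ps; split => // s sP; apply: wAB_sub (W s sP); by move=> a b /andP[].
Qed.

Theorem menger e (A B : {set V}) k :
  (forall Z, sepAB e A B Z -> k <= #|Z|) ->
  exists Ps, [/\ size Ps = k, Fam Ps & forall s, s \in Ps -> wAB e A B s].
Proof. exact: menger_n (leqnn _). Qed.

End Menger.

End C.
Import C.

Module D.
Section App.
Variables (V : finType) (e : rel V) (r w u v : V) (I : {set V * V}).
Hypothesis Hl : loopless e.
Hypothesis Hwr : w != r.
Hypothesis Hur : u != r.
Hypothesis Hvw : v != w.
Hypothesis HIin : I \subset in_edges e w.

Implicit Types (g : rel V) (s t p q : seq V).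

Definition G2u := fun a b => [&& e a b, a != r, a != w, b != r & b != w].
Definition G2 := del_edge G2u u v.
Definition Aset := [set a | e r a && (a != w)].
Definition Bset := [set t | ((t, w) \in I) && (t != r)].

Lemma dpath_shape g p : dpath g r w p -> exists q,
  [/\ p = rcons q w, path g r (rcons q w), r \notin q, w \notin q & uniq q].
Proof.
case/and3P => pp up /eqP lp.
case/lastP: p pp up lp => [|q x] pp up lp.
  by move: Hwr; rewrite -lp eqxx.
rewrite last_rcons in lp; subst x.
move: up; rewrite /= mem_rcons inE negb_or rcons_uniq => /and3P[/andP[rw rq] wq uq].
by exists q.
Qed.

Lemma interior_rcons q : interior r (rcons q w) = q.
Proof. by rewrite /interior belast_rcons. Qed.

Lemma term_edge_rcons q : term_edge r (rcons q w) = (last r q, w).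
Proof. by rewrite /term_edge belast_rcons last_rcons. Qed.

Lemma in_I f : f \in I -> e f.1 f.2 /\ f.2 = w.
Proof. by move/(subsetP HIin); rewrite inE => /andP[-> /eqP ->]. Qed.

Lemma G2u_verts h t : path G2u h t -> forall x, x \in t -> x != r /\ x != w.
Proof.
elim: t h => [|a t IH] h //= /andP[/and5P[_ _ _ ar aw] pt] x.
rewrite inE => /orP[/eqP -> //|]; exact: IH pt x.
Qed.

Lemma Aset_rw a : a \in Aset -> a != r /\ a != w.
Proof.
rewrite inE => /andP[era ->]; split => //.
by apply: contraTneq era => ->; rewrite (negbTE (Hl r)).
Qed.

Lemma wAB_verts s : wAB G2 Aset Bset s -> forall x, x \in s -> x != r /\ x != w.
Proof.
case: s => [|h t] //= /and3P[hA pt _] x; rewrite inE => /orP[/eqP ->|xt].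
  exact: Aset_rw.
apply: G2u_verts xt; apply: sub_path pt; by move=> a b /andP[].
Qed.


Lemma G2_e a b : G2 a b -> e a b.
Proof. by case/andP => /and5P[]. Qed.

Lemma walks_to_inG Ws : size Ws = #|Bset| -> Fam Ws ->
  (forall s, s \in Ws -> wAB G2 Aset Bset s) -> in_G (del_edge e u v) r w I.
Proof.
move=> sz [HU HD] HW.
pose mk s := if s is h :: t then rcons (h :: shorten h t) w else [::].
have eDrw : (r, w) \in I -> del_edge e u v r w.
  move=> /in_I [erw _]; by rewrite /del_edge erw xpair_eqE eq_sym (negbTE Hur).
have Hmk : forall s, s \in Ws -> exists h t t', [/\ s = h :: t,
    mk s = rcons (h :: t') w, dpath (del_edge e u v) r w (mk s),
    {subset h :: t' <= s} & last h t' = last h t].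
  move=> [|h t] sW; first by have := HW _ sW.
  have := HW _ sW; rewrite /= => /and3P[hA pt tB].
  have Hv := wAB_verts (HW _ sW).
  have [pt' ut' subt' lt'] : [/\ path G2 h (shorten h t),
      uniq (h :: shorten h t), {subset shorten h t <= t} &
      last h (shorten h t) = last h t].
    by case: (shortenP pt) => t' *; split.
  exists h, t, (shorten h t); split => //.
  - rewrite /mk /dpath /= rcons_path last_rcons eqxx andbT.
    apply/andP; split.
      apply/andP; split.
        move: hA; rewrite inE => /andP[erh _].
        by rewrite /del_edge erh xpair_eqE [r == u]eq_sym (negbTE Hur).
      apply/andP; split.
        apply: sub_path pt' => a b /andP[/and5P[eab _ _ _ _] nab].
        by rewrite /del_edge eab nab.
      rewrite lt'; move: tB; rewrite inE => /andP[/in_I [etw _] _].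
      by rewrite /del_edge etw xpair_eqE [w == v]eq_sym (negbTE Hvw) andbF.
    have Hv' : forall x, x \in h :: shorten h t -> x != r /\ x != w.
      move=> x; rewrite inE => /orP[/eqP->|/subt' xt]; apply: Hv;
        by rewrite inE ?eqxx ?xt ?orbT.
    move: ut'; rewrite /= => /andP[ht' ut''].
    have [hr hw] := Hv' h (mem_head _ _).
    have wt' : w \notin shorten h t.
      apply/negP => wt; have := Hv' w; rewrite inE wt orbT => /(_ isT) [_].
      by rewrite eqxx.
    have rt' : r \notin shorten h t.
      apply/negP => rt; have := Hv' r; rewrite inE rt orbT => /(_ isT) [].
      by rewrite eqxx.
    rewrite !inE !mem_rcons !inE !negb_or rcons_uniq wt' ut'' ht' rt' eq_sym hr.
    by rewrite eq_sym Hwr hw.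
  - by move=> x; rewrite !inE => /orP[->//|/subt' ->]; rewrite orbT.
have mkW : forall s, s \in Ws -> exists h t t',
    [/\ s = h :: t, mk s = h :: rcons t' w, dpath (del_edge e u v) r w (mk s),
        interior r (mk s) = h :: t' /\ {subset h :: t' <= s} &
        term_edge r (mk s) = (last r s, w)].
  move=> s sW; have [h [t [t' [Es Em Hd Hs Hl']]]] := Hmk s sW.
  exists h, t, t'; split => //.
  - by rewrite Em interior_rcons; split => // x; rewrite Es; apply: Hs.
  - by rewrite Em term_edge_rcons Es /= Hl'.
have lastB : forall s, s \in Ws -> last r s \in Bset.
  by move=> [|h t] /HW //= /and3P[].
split.
  apply/subsetP => f fI; have [ef fw] := in_I fI.
  rewrite inE /del_edge ef fw eqxx andbT xpair_eqE [w == v]eq_sym (negbTE Hvw).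
  by rewrite andbF.
pose Ps := (if (r, w) \in I then [:: [:: w]] else [::]) ++ map mk Ws.
have mkinj : {in Ws &, injective mk}.
  move=> s s' sW s'W Em; apply/eqP/negPn/negP => ns.
  have [h [t [t' [Es Em1 _ _ _]]]] := mkW s sW.
  have [h' [t2 [t2' [Es' Em2 _ _ _]]]] := mkW s' s'W.
  move: Em; rewrite Em1 Em2 => -[Eh _]; subst h'.
  have h1 : h \in s by rewrite Es mem_head.
  have h2 : h \in s' by rewrite Es' mem_head.
  exact: (disjP _ _ (HD s s' sW s'W ns)) h h1 h2.
exists Ps; split.
  split.
  - rewrite cat_uniq map_inj_in_uniq // HU !andbT; case: ((r, w) \in I) => //=;
    apply/hasPn => p /mapP[s sW ->]; rewrite ?in_nil // inE.
    have [h [t [t' [_ -> _ _ _]]]] := mkW s sW.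
    by apply/eqP => E; have := congr1 size E; rewrite /= size_rcons.
  - move=> p; rewrite mem_cat => /orP[|/mapP[s sW ->]].
      case Hrw: ((r, w) \in I); rewrite // inE => /eqP ->.
      by rewrite /dpath /= eDrw // !inE eqxx andbT eq_sym Hwr.
    by have [h [t [t' [_ _ Hd _ _]]]] := mkW s sW.
  - move=> p q; rewrite !mem_cat.
    have Hw0 : forall p, p \in (if (r, w) \in I then [:: [:: w]] else [::]) ->
        interior r p = [::].
      by case: ((r, w) \in I) => // p0; rewrite inE => /eqP ->.
    move=> /orP[/Hw0 -> _ _|/mapP[s sW ->]]; first exact: disjoint0.
    move=> /orP[/Hw0 -> _|/mapP[s' s'W ->] ns].
      by rewrite disjoint_sym; exact: disjoint0.
    have ns' : s != s' by apply: contraNneq ns => ->.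
    have [h [t [t' [_ _ _ [-> sub1] _]]]] := mkW s sW.
    have [h' [t2 [t2' [_ _ _ [-> sub2] _]]]] := mkW s' s'W.
    apply/disjP => x /sub1 xs /sub2 xs'.
    exact: (disjP _ _ (HD s s' sW s'W ns')) x xs xs'.
apply/setP => f; rewrite inE; apply/idP/idP.
  case/mapP => p; rewrite mem_cat => /orP[pI|/mapP[s sW ->]] ->.
    by move: pI; case Hrw: ((r, w) \in I); rewrite // inE => /eqP ->.
  have [h [t [t' [_ _ _ _ ->]]]] := mkW s sW.
  by move: (lastB s sW); rewrite inE => /andP[].
move=> fI; have [_ fw] := in_I fI.
case: f fI fw => t w' fI /= fw; subst w'.
case: (eqVneq t r) => [Etr|ntr].
  subst t; apply/mapP; exists [:: w]; last by [].
  by rewrite mem_cat fI inE eqxx.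
have tB : t \in Bset by rewrite inE fI ntr.
have Hu : uniq (map (last r) Ws).
  apply: Fam_uniq_map => // -[|h t'] sW; first by have := HW _ sW.
  by rewrite /=; apply: mem_last.
have Hsub : {subset map (last r) Ws <= Bset} by move=> x /mapP[s sW ->]; exact: lastB.
have Hc : #|Bset| <= size (map (last r) Ws) by rewrite size_map sz.
have /mapP[s sW Es] := cover_seq Hu Hsub Hc tB.
have [h [t1 [t' [_ _ _ _ Ete]]]] := mkW s sW.
apply/mapP; exists (mk s); last by rewrite Ete Es.
by rewrite mem_cat; apply/orP; right; apply: map_f.
Qed.


Lemma exists_Z : ~ in_G (del_edge e u v) r w I ->
  exists Z : {set V}, [/\ sepAB G2 Aset Bset Z, #|Z| < #|Bset|, r \notin Z & w \notin Z].
Proof.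
move=> Hn; apply: NNPP => HnZ.
have H : forall Z, sepAB G2 Aset Bset Z -> #|Bset| <= #|Z|.
  move=> Z HZ; rewrite leqNgt; apply/negP => HZk; apply: HnZ.
  exists (Z :\: [set r; w]); split.
  - move=> s Hs; have /hasZP [x xs xZ] := HZ s Hs.
    have [xr xw] := wAB_verts Hs xs.
    by apply/hasZP; exists x => //; rewrite !inE xZ andbT negb_or xr xw.
  - by apply: leq_ltn_trans HZk; apply: subset_leq_card; apply: subsetDl.
  - by rewrite !inE eqxx.
  - by rewrite !inE eqxx orbT.
have [Ws [sz F W]] := menger H.
exact: Hn (walks_to_inG sz F W).
Qed.


Lemma path_G2u h t : path e h t -> h != r -> h != w -> r \notin t -> w \notin t ->
  path G2u h t.
Proof.
elim: t h => [|a t IH] h //= /andP[eha pt] hr hw.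
rewrite !inE !negb_or => /andP[ra rt] /andP[wa wt].
have ar : a != r by rewrite eq_sym.
have aw : a != w by rewrite eq_sym.
by rewrite /G2u eha hr hw ar aw /=; apply: IH.
Qed.

Lemma wAB_verts_u s : wAB G2u Aset Bset s -> forall x, x \in s -> x != r /\ x != w.
Proof.
case: s => [|h t] //= /and3P[hA pt _] x; rewrite inE => /orP[/eqP ->|xt].
  exact: Aset_rw.
exact: G2u_verts pt x xt.
Qed.

Lemma sys_walks Qs : rw_path_system e r w Qs -> Eplus r Qs = I ->
  exists Ws, [/\ Fam Ws, #|Bset| <= size Ws &
    forall W, W \in Ws -> wAB G2u Aset Bset W /\ uniq W].
Proof.
case => HU Hd HD HE.
pose L := [seq p <- Qs | interior r p != [::]].
exists (map (interior r) L); split.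
- apply: Fam_of_fun; first exact: filter_uniq.
    move=> a b; rewrite !mem_filter => /andP[_ aQ] /andP[_ bQ]; exact: HD.
  by move=> a; rewrite mem_filter => /andP[].
- rewrite size_map.
  have Hsub : {subset enum Bset <= map (fun p => last r (interior r p)) L}.
    move=> t; rewrite mem_enum inE => /andP[tI tr].
    move: tI; rewrite -HE inE => /mapP[p pQ Ep].
    have [q [Ep' _ _ _ _]] := dpath_shape (Hd p pQ).
    move: Ep; rewrite Ep' term_edge_rcons => -[Et].
    apply/mapP; exists p; last by rewrite Ep' interior_rcons.
    rewrite mem_filter pQ andbT Ep' interior_rcons.
    by case: q {Ep'} Et => //= Et; rewrite Et eqxx in tr.
  have := uniq_leq_size (enum_uniq _) Hsub.
  by rewrite size_map -cardE.
- move=> W /mapP[p]; rewrite mem_filter => /andP[ne pQ] EW.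
  have [q [Ep pp rq wq uq]] := dpath_shape (Hd p pQ).
  rewrite Ep interior_rcons in EW ne; subst W; split => //.
  case: q ne pp rq wq uq Ep => [|h t] // _ pp rq wq uq Ep.
  move: pp; rewrite /= rcons_path => /andP[erh /andP[pt _]].
  move: rq wq; rewrite !inE !negb_or => /andP[rh rt] /andP[wh wt].
  have hr : h != r by rewrite eq_sym.
  have hw' : h != w by rewrite eq_sym.
  rewrite erh hw' (path_G2u pt hr hw' rt wt) /=.
  have : (last h t, w) \in I.
    by rewrite -HE inE; apply/mapP; exists p => //; rewrite Ep term_edge_rcons.
  move=> HI'; rewrite HI' /=.
  have := mem_last h t; rewrite inE => /orP[/eqP ->|lt]; first by rewrite eq_sym.
  by apply: contraNneq rt => <-.
Qed.


Lemma exists_W2 (Z : {set V}) Qs : sepAB G2 Aset Bset Z -> #|Z| < #|Bset| ->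
  rw_path_system e r w Qs -> Eplus r Qs = I ->
  exists s2, [/\ path G2 v s2, last v s2 \in Bset, ~~ has (mem Z) (v :: s2) & v != r].
Proof.
move=> sepZ cZ HQ HE.
have [Ws [F Hsz HW]] := sys_walks HQ HE.
have [W WW nZ] : exists2 W, W \in Ws & ~~ has (mem Z) W.
  apply: NNPP => H.
  have : size Ws <= #|Z|.
    apply: Fam_hit F _ => W WW; apply/negPn/negP => nZ; apply: H; by exists W.
  lia.
have [wW uW] := HW W WW.
case: W wW uW WW nZ => [|h t] // wW uW WW nZ.
have wW' := wW; case/and3P: wW' => hA pt tB.
case: (path_del_or u v pt) => [pt'|[s1 [s2 E]]].
  have Hw : wAB G2 Aset Bset (h :: t) by rewrite /= hA pt' tB.
  by have := sepZ _ Hw; rewrite (negbTE nZ).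
exists s2.
have Hv : v != r.
  have := wAB_verts_u wW (x := v); rewrite E mem_cat !inE eqxx !orbT => /(_ isT) [].
  by [].
rewrite E in uW; move: uW; rewrite cat_uniq => /and3P[_ _ /= /andP[uvs _]].
have nZ2 : ~~ has (mem Z) (v :: s2).
  apply: contra nZ => /hasZP [x xs xZ]; apply/hasZP; exists x => //.
  by rewrite E mem_cat !inE; move: xs; rewrite inE => /orP[->|->]; rewrite ?orbT.
split => //.
- have : path G2u u (v :: s2).
    by move: pt; rewrite -[path G2u h t]/(wk G2u (h :: t)) E wk_cat => /andP[].
  case/andP => _ ps2; apply: path_del_notin => //.
  by apply: contra uvs; apply: mem_belast.
- by move: tB; rewrite -[last h t]/(last r (h :: t)) E last_cat /=.
Qed.


Lemma card_I : #|I| = #|Bset| + ((r, w) \in I).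
Proof.
rewrite (cardsD1 (r, w) I) addnC; congr (_ + _).
have -> : Bset = [set f.1 | f in I :\ (r, w)].
  apply/setP => t; rewrite inE; apply/andP/imsetP => [[tI tr] | [f fI ->]].
    exists (t, w) => //; rewrite !inE tI andbT xpair_eqE negb_and tr //.
  move: fI; rewrite !inE => /andP[nf fI]; have [_ f2] := in_I fI.
  case: f nf fI f2 => a b /= nf fI f2; subst b; split => //.
  by apply: contraNneq nf => ->.
rewrite card_in_imset // => f g; rewrite !inE => /andP[_ fI] /andP[_ gI] E.
have [_ f2] := in_I fI; have [_ g2] := in_I gI.
by case: f g fI gI f2 g2 E => a b [c d] /= _ _ -> -> ->.
Qed.


Lemma last_in (x : V) q : last x q != x -> last x q \in q.
Proof. case: q => [|h t] /=; first by rewrite eqxx. move=> _; exact: mem_last. Qed.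

Lemma last_notin (x : V) q : x \notin q -> last x q = x -> q = [::].
Proof.
case: q => //= h t xq E; move: xq; rewrite -{1}E.
by have := mem_last h t => ->.
Qed.

Lemma te_inj g Qs : rw_path_system g r w Qs -> {in Qs &, injective (term_edge r)}.
Proof.
case=> HU Hd HD p p' pQ p'Q E; apply/eqP/negPn/negP => npq.
have [q [Ep _ rq _ _]] := dpath_shape (Hd p pQ).
have [q' [Ep' _ rq' _ _]] := dpath_shape (Hd p' p'Q).
move: E; rewrite Ep Ep' !term_edge_rcons => -[E].
case: (eqVneq (last r q) r) => [Er|Nr].
  have Er' : last r q' = r by rewrite -E.
  by move: npq; rewrite Ep Ep' (last_notin rq Er) (last_notin rq' Er') eqxx.
have y1 := last_in Nr; have y2 : last r q' \in q' by apply: last_in; rewrite -E.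
have := HD p p' pQ p'Q npq; rewrite Ep Ep' !interior_rcons => /disjP.
by move=> /(_ (last r q) y1); rewrite E => /(_ y2).
Qed.

End App.

End D.
Import D.

Module E.
Section WithZ.
Variables (V : finType) (e : rel V) (r w u v : V) (I : {set V * V}).
Variables (Z : {set V}) (s2 : seq V).
Hypothesis Hl : loopless e.
Hypothesis Hwr : w != r.
Hypothesis Hur : u != r.
Hypothesis Hvw : v != w.
Hypothesis HIin : I \subset in_edges e w.
Local Notation G2 := (G2 e r w u v).
Local Notation G2u := (G2u e r w).
Local Notation Aset := (Aset e r w).
Local Notation Bset := (Bset r w I).
Hypothesis sepZ : sepAB G2 Aset Bset Z.
Hypothesis cZ : #|Z| < #|Bset|.
Hypothesis rZ : r \notin Z.
Hypothesis wZ : w \notin Z.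
Hypothesis W2p : path G2 v s2.
Hypothesis W2B : last v s2 \in Bset.
Hypothesis W2Z : ~~ has (mem Z) (v :: s2).
Hypothesis vr : v != r.

Implicit Types (g : rel V) (s t p q : seq V).

Definition S3 := v |: (w |: Z).
Definition G3 := fun a b => e a b && (b \notin S3).
Definition R := [set c | connect G3 r c].

Lemma path_G3 a p : path e a p -> ~~ has (mem S3) p -> path G3 a p.
Proof.
elim: p a => [|b p IH] a //= /andP[eab pp]; rewrite negb_or => /andP[bS pS].
by rewrite /G3 eab bS /=; apply: IH.
Qed.

Lemma G3_notin a p : path G3 a p -> ~~ has (mem S3) p.
Proof.
elim: p a => [|b p IH] a //= /andP[/andP[_ bS] pp].
by rewrite negb_or bS /=; apply: IH pp.
Qed.

Lemma G3_to_G2 h t : path G3 h t -> r \notin h :: t -> h \notin S3 -> path G2 h t.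
Proof.
elim: t h => [|a t IH] h //= /andP[/andP[eha aS] pt].
rewrite !inE !negb_or => /and3P[rh ra rt] hS.
move: (aS) (hS); rewrite !inE !negb_or => /and3P[av aw _] /and3P[_ hw _].
apply/andP; split; last first.
  by apply: IH => //; rewrite inE negb_or ra.
rewrite /G2 /D.G2u /del_edge eha eq_sym rh hw eq_sym ra aw /=.
by rewrite xpair_eqE (negbTE av) andbF.
Qed.

Lemma R_walk c : c \in R -> c != r -> exists h t,
  [/\ h \in Aset, path G2 h t, last h t = c & ~~ has (mem S3) (h :: t)].
Proof.
rewrite inE => /connectP [p pp ->] cr.
have hr : has (pred1 r) (r :: p) by rewrite /= eqxx.
have [s1 [z [s2' [E /eqP zr ns2 _]]]] := tr2P hr.
subst z.
have ps2 : path G3 r s2'.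
  by move: pp; rewrite -[path G3 r p]/(wk G3 (r :: p)) E wk_cat => /andP[].
have lp : last r p = last r s2'.
  by rewrite -[last r p]/(last r (r :: p)) E last_cat.
rewrite lp in cr *.
clear E pp; case: s2' ps2 ns2 lp cr => [|h t] ps2 ns2 lp cr.
  by rewrite /= eqxx in cr.
case/andP: ps2 => /andP[erh hS] pt.
exists h, t; split => //.
- move: hS; rewrite !inE !negb_or erh => /and3P[_ -> _] //.
- apply: G3_to_G2 => //; apply: contra ns2 => rt.
  by apply/hasP; exists r; rewrite //= eqxx.
- by rewrite /= negb_or hS; apply: G3_notin pt.
Qed.


Lemma notS3 s : ~~ has (mem S3) s -> ~~ has (mem Z) s /\ w \notin s.
Proof.
move=> H; split.
  apply: contra H => /hasZP [x xs xZ]; apply/hasZP; exists x => //.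
  by rewrite !inE xZ !orbT.
apply: contra H => ws; apply/hasZP; exists w => //; by rewrite !inE eqxx orbT.
Qed.

Lemma noX x : x \in R -> e x v -> x = u.
Proof.
move=> xR exv; apply/eqP/negPn/negP => xu.
case: (eqVneq x r) => [xr|xr].
  subst x.
  have Hw : wAB G2 Aset Bset (v :: s2) by rewrite /= inE exv Hvw W2p W2B.
  by have := sepZ Hw; rewrite (negbTE W2Z).
have [h [t [hA pt lt nS]]] := R_walk xR xr.
have [nZ nw] := notS3 nS.
have xin : x \in h :: t by rewrite -lt; apply: mem_last.
have xw : x != w by apply: contraNneq nw => <-.
have Hw : wAB G2 Aset Bset (h :: (t ++ v :: s2)).
  rewrite /= hA cat_path pt last_cat lt /= W2p W2B !andbT.
  rewrite /D.G2 /D.G2u /del_edge exv xr xw vr Hvw /= xpair_eqE (negbTE xu).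
  by [].
have := sepZ Hw; rewrite -cat_cons has_cat (negbTE nZ) (negbTE W2Z).
by [].
Qed.

Lemma I_R (t : V) : t \in R -> (t, w) \in I -> t = r.
Proof.
move=> tR tI; apply/eqP/negPn/negP => tr.
have [h [t' [hA pt lt nS]]] := R_walk tR tr.
have [nZ _] := notS3 nS.
have Hw : wAB G2 Aset Bset (h :: t') by rewrite /= hA pt lt inE tI tr.
by have := sepZ Hw; rewrite (negbTE nZ).
Qed.

Lemma rR : r \in R.
Proof. by rewrite inE connect0. Qed.

Lemma path_R p : path e r p -> ~~ has (mem S3) p -> last r p \in R.
Proof.
move=> pp nS; rewrite inE; apply/connectP; exists p => //.
exact: path_G3.
Qed.


Lemma arith1 (a n q j d i B0 x z sv : nat) : a + n = q -> j <= q -> n <= d + x ->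
  j = i + d -> i = B0 + x -> sv <= z.+1 -> z < B0 -> sv <= a.
Proof. lia. Qed.

Lemma arith2 (a n q j sv z B0 : nat) : a + n = q -> j <= q -> a <= sv ->
  sv <= z.+1 -> z < B0 -> B0 < j -> 0 < n.
Proof. lia. Qed.

Lemma build (J : {set V * V}) Qs (b : bool) :
  I \subset J -> rw_path_system e r w Qs -> Eplus r Qs = J ->
  (~~ b -> forall y : V, y \in R -> ~~ e y w) -> (b -> #|Bset| < #|J|) ->
  exists (S : {set V}) (Ps : seq (seq V)),
    [/\ r \notin S /\ v \in S,
        rS_path_system e r S Ps, Vplus r Ps = S,
        (forall f, f \in in_edges e v :\: [set (u, v)] -> separates e r S f.1) &
        exists2 p, p \in Ps & term_edge r p = (u, v)].
Proof.
move=> IJ HQ HE Hnb Hb.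
have [HU Hd HD] := HQ.
pose Sv := v |: Z.
have rSv : r \notin Sv by rewrite !inE negb_or eq_sym vr rZ.
have wSv : w \notin Sv by rewrite !inE negb_or eq_sym Hvw wZ.
pose S := if b then w |: Sv else Sv.
have SvS : {subset Sv <= S}.
  move=> x xS; rewrite /S; case: (b) => //; by rewrite in_setU1 xS orbT.
have wS : b -> w \in S by move=> bt; rewrite /S bt !inE eqxx.
have rS : r \notin S.
  rewrite /S; case: (b) => //; by rewrite in_setU1 negb_or eq_sym Hwr.
have S3S : forall s, ~~ has (mem S) s -> w \notin s -> ~~ has (mem S3) s.
  move=> s nS ws; apply/hasZP => -[x xs]; rewrite !inE => /or3P[/eqP xv|/eqP xw|xZ].
  - by case/negP: nS; apply/hasZP; exists x => //; apply: SvS; rewrite xv !inE eqxx.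
  - by subst x; rewrite xs in ws.
  - by case/negP: nS; apply/hasZP; exists x => //; apply: SvS; rewrite !inE xZ orbT.
pose meets p := has (mem Sv) p.
pose fanp p := if meets p then tr1 (mem Sv) p else p.
have Hmeet : forall p, p \in Qs -> meets p -> exists s1 z,
    [/\ fanp p = rcons s1 z, z \in Sv, ~~ has (mem Sv) s1, w \notin s1 &
        [/\ path e r (rcons s1 z), uniq (r :: rcons s1 z) &
            {subset rcons s1 z <= p}]].
  move=> p pQ mp.
  have [s1 [z [s2' [Ep zS ns1 Et]]]] := tr1P mp.
  exists s1, z; rewrite /fanp mp Et; split => //.
  - case/and3P: (Hd p pQ) => _ up /eqP lp.
    have wz : w \in z :: s2' by rewrite -lp Ep last_cat /=; apply: mem_last.
    move: up; rewrite /= => /andP[_]; rewrite Ep cat_uniq => /and3P[_ Hdis _].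
    by apply: contra Hdis => ws1; apply/hasP; exists w.
  - case/and3P: (Hd p pQ) => pp up _.
    split.
    + by move: pp; rewrite -[path e r p]/(wk e (r :: p)) Ep -cat_cons wk_cat => /andP[].
    + by move: up; rewrite Ep -cat_cons -cat_rcons cat_uniq => /andP[].
    + by move=> x; rewrite Ep mem_rcons mem_cat !inE => /orP[->|->]; rewrite ?orbT.
have SvS3 : forall s, ~~ has (mem Sv) s -> w \notin s -> ~~ has (mem S3) s.
  move=> s nS ws; apply/hasZP => -[x xs]; rewrite !inE => /or3P[/eqP xv|/eqP xw|xZ].
  - by case/negP: nS; apply/hasZP; exists x => //; rewrite xv !inE eqxx.
  - by subst x; rewrite xs in ws.
  - by case/negP: nS; apply/hasZP; exists x => //; rewrite !inE xZ orbT.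
have Hnm : forall p, p \in Qs -> ~~ meets p -> fanp p = p /\ exists q,
    [/\ p = rcons q w, path e r q, ~~ has (mem S3) q, last r q \in R &
        (last r q, w) \in J /\ e (last r q) w].
  move=> p pQ nm; split; first by rewrite /fanp (negbTE nm).
  have [q [Ep pp rq wq uq]] := dpath_shape Hwr (Hd p pQ).
  move: pp; rewrite rcons_path => /andP[pq eqw].
  have nSq : ~~ has (mem Sv) q.
    apply: contra nm => /hasZP [x xq xS]; apply/hasZP; exists x => //.
    by rewrite Ep mem_rcons inE xq orbT.
  have nS3 := SvS3 q nSq wq.
  exists q; split => //; first exact: path_R.
  split => //; rewrite -HE inE; apply/mapP; exists p => //.
  by rewrite Ep term_edge_rcons.
have Hint : forall p, p \in Qs -> forall c, c \in fanp p -> c != w -> c \in interior r p.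
  move=> p pQ c cf cw.
  have [q [Ep _ _ _ _]] := dpath_shape Hwr (Hd p pQ).
  have cp : c \in p.
    case: (boolP (meets p)) => mp.
      by have [s1 [z [Ef _ _ _ [_ _ sub]]]] := Hmeet p pQ mp; apply: sub; rewrite -Ef.
    by have [Ef _] := Hnm p pQ mp; rewrite -Ef.
  by move: cp; rewrite Ep interior_rcons mem_rcons inE (negbTE cw).
have Hw : forall p, p \in Qs -> w \in fanp p -> ~~ meets p.
  move=> p pQ; apply: contraTN => mp.
  have [s1 [z [Ef zS _ ws1 _]]] := Hmeet p pQ mp.
  rewrite Ef mem_rcons inE negb_or ws1 andbT.
  by apply: contraNneq wSv => ->.
have Hne : forall p, p \in Qs -> fanp p != [::].
  move=> p pQ; case: (boolP (meets p)) => mp.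
    by have [s1 [z [-> _ _ _ _]]] := Hmeet p pQ mp; case: s1.
  have [-> _] := Hnm p pQ mp.
  by have [q [Ep _ _ _ _]] := dpath_shape Hwr (Hd p pQ); rewrite Ep; case: q {Ep}.
have HrS : forall p, p \in Qs -> meets p || b -> rS_path e r S (fanp p).
  move=> p pQ; case: (boolP (meets p)) => mp /= Hb'.
    have [s1 [z [-> zS ns1 ws1 [pp up _]]]] := Hmeet p pQ mp.
    split; rewrite ?last_rcons.
    - by rewrite /dpath pp up last_rcons eqxx.
    - exact: SvS.
    - rewrite /interior belast_rcons /= disjoint_has.
      apply/hasPn => x xs1; apply/negP => xS.
      move: xS; rewrite /S; case: (b) => [|xS].
        rewrite in_setU1 => /orP[/eqP xw|xS]; first by subst x; rewrite xs1 in ws1.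
        by case/negP: ns1; apply/hasZP; exists x.
      by case/negP: ns1; apply/hasZP; exists x.
  have [-> [q [Ep pq nS3 _ _]]] := Hnm p pQ mp.
  have Hdp := Hd p pQ.
  split; first by move: Hdp; rewrite /dpath Ep last_rcons.
    by rewrite Ep last_rcons; apply: wS.
  rewrite Ep interior_rcons disjoint_has; apply/hasPn => x xq; apply/negP => xS.
  case/hasZP: nS3; exists x => //.
  move: xS; rewrite /S; case: (b); rewrite !inE.
    by case/or3P => ->; rewrite ?orbT.
  by case/orP => ->; rewrite ?orbT.
pose M := filter meets Qs.
pose N := filter (predC meets) Qs.
have szQ : size M + size N = size Qs by rewrite !size_filter count_predC.
have cJ : #|J| <= size Qs.
  rewrite -HE.
  have -> : #|Eplus r Qs| = #|map (term_edge r) Qs| by apply: eq_card => f; rewrite inE.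
  by rewrite (leq_trans (card_size _)) // size_map.
have cN : size N <= #|J :\: I| + ((r, w) \in I).
  have HuN : uniq (map (term_edge r) N).
    rewrite map_inj_in_uniq ?filter_uniq // => p q.
    rewrite !mem_filter => /andP[_ pQ] /andP[_ qQ]; exact: (te_inj Hwr HQ pQ qQ).
  pose X : {set V * V} := if (r, w) \in I then [set (r, w)] else set0.
  have Hsub : map (term_edge r) N \subset (J :\: I) :|: X.
    apply/subsetP => f /mapP[p]; rewrite mem_filter => /andP[nm pQ] ->.
    have [_ [q [Ep _ _ qR [qJ _]]]] := Hnm p pQ nm.
    rewrite Ep term_edge_rcons.
    case: (boolP ((last r q, w) \in I)) => qI.
      have Er := I_R qR qI; rewrite Er in qI *.
      by rewrite /X qI !inE eqxx orbT.
    by rewrite !inE qI qJ.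
  rewrite -(size_map (term_edge r)) -(card_uniqP HuN).
  apply: leq_trans (subset_leq_card Hsub) _.
  apply: leq_trans (leq_card_setU (J :\: I) X).1 _.
  by rewrite /X; case: ((r, w) \in I); rewrite ?cards1 ?cards0.
have cJI : #|J| = #|I| + #|J :\: I|.
  by rewrite -(cardsID I J) (setIidPr IJ).
have cIB := card_I r HIin.
have cSv : #|Sv| <= #|Z|.+1 by rewrite cardsU1; case: (v \in Z).
have cM : #|Sv| <= size M.
  exact: (arith1 szQ cJ cN cJI cIB cSv cZ).
pose L := M ++ (if b then take 1 N else [::]).
have LQ : {subset L <= Qs}.
  move=> p; rewrite mem_cat mem_filter => /orP[/andP[]//|].
  by case: (b) => //; move/mem_take; rewrite mem_filter => /andP[].
have Lm : forall p, p \in L -> meets p || b.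
  move=> p; rewrite mem_cat mem_filter => /orP[/andP[-> _]//|].
  by case: (b) => //; rewrite orbT.
have Lnm : forall p q, p \in L -> q \in L -> ~~ meets p -> ~~ meets q -> p = q.
  move=> p q; rewrite !mem_cat !mem_filter => /orP[/andP[mp _]|pN];
    first by rewrite mp.
  move=> /orP[/andP[mq _]|qN]; first by rewrite mq.
  move: pN qN; case: (b) => //; case: (N) => [|x N'] //=.
  by rewrite take0 !inE => /eqP -> /eqP ->.
have uL : uniq L.
  rewrite cat_uniq; apply/and3P; split; first exact: filter_uniq.
    apply/hasPn => p; case: (b) => // /mem_take; rewrite /N /M !mem_filter.
    by case/andP => /= nm _; rewrite (negbTE nm).
  by case: (b) => //; apply: take_uniq; exact: filter_uniq.
pose Fan := map fanp L.
have FF : Fam Fan.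
  apply: Fam_of_fun uL _ _.
  - move=> a c aL cL nac; apply/disjP => x xa xc.
    case: (eqVneq x w) => [xw|xw].
      subst x; have := Lnm a c aL cL (Hw a (LQ a aL) xa) (Hw c (LQ c cL) xc).
      by move/eqP; rewrite (negbTE nac).
    have := HD a c (LQ a aL) (LQ c cL) nac; move/disjP; apply.
      exact: Hint (LQ a aL) _ xa xw.
    exact: Hint (LQ c cL) _ xc xw.
  - move=> a aL; exact: Hne a (LQ a aL).
have HM : forall a, a \in M -> exists s1, fanp a = rcons s1 (last r (fanp a)) /\
    [/\ last r (fanp a) \in Sv, ~~ has (mem Sv) s1, w \notin s1 & path e r (rcons s1 (last r (fanp a)))].
  move=> a; rewrite mem_filter => /andP[ma aQ].
  have [s1 [z [Ef zS ns1 ws1 [pp _ _]]]] := Hmeet a aQ ma.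
  by exists s1; rewrite Ef last_rcons.
have HuF : uniq (map (last r) Fan).
  apply: Fam_uniq_map FF _ => x /mapP[a aL ->].
  have := Hne a (LQ a aL); case: (fanp a) => [|h t] // _.
  by rewrite /=; apply: mem_last.
have HuM : uniq (map (last r) (map fanp M)).
  by move: HuF; rewrite /Fan /L !map_cat cat_uniq => /andP[].
have subM : {subset map (last r) (map fanp M) <= Sv}.
  by move=> x /mapP[y /mapP[a aM ->] ->]; have [s1 [_ [? _ _ _]]] := HM a aM.
have coverSv : {subset Sv <= map (last r) (map fanp M)}.
  by apply: cover_seq HuM subM _; rewrite !size_map.
have szM : size M <= #|Sv|.
  have Hs : {subset map (last r) (map fanp M) <= enum Sv}.
    by move=> x /subM; rewrite mem_enum.
  by have := uniq_leq_size HuM Hs; rewrite !size_map -cardE.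
exists S, Fan; split.
- split => //; apply: SvS; by rewrite !inE eqxx.
- split; [exact: FF.1 | | exact: FF.2].
  by move=> p /mapP[a aL ->]; apply: HrS (LQ a aL) (Lm a aL).
- apply/setP => x; rewrite inE; apply/idP/idP.
  + case/mapP => y /mapP[a aL ->] ->.
    case: (boolP (meets a)) => ma.
      have aM : a \in M by rewrite /M mem_filter ma (LQ a aL).
      by have [s1 [_ [H _ _ _]]] := HM a aM; apply: SvS.
    have bb : b by have := Lm a aL; rewrite (negbTE ma).
    have [-> _] := Hnm a (LQ a aL) ma.
    by case/and3P: (Hd a (LQ a aL)) => _ _ /eqP ->; apply: wS.
  + move=> xS; case: (boolP (x \in Sv)) => xSv.
      by have := coverSv x xSv; rewrite /Fan /L !map_cat mem_cat => ->.
    have bb : b by move: xS; rewrite /S; case: (b) => //; rewrite (negbTE xSv).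
    have xw : x = w by move: xS; rewrite /S bb in_setU1 (negbTE xSv) orbF => /eqP.
    have := arith2 szQ cJ szM cSv cZ (Hb bb).
    case EN: N => [|p0 N'] // _.
    have p0N : p0 \in N by rewrite EN mem_head.
    move: p0N; rewrite /N mem_filter => /andP[nm p0Q].
    apply/mapP; exists (fanp p0).
      by rewrite /Fan /L bb EN map_cat mem_cat /= inE eqxx orbT.
    have [-> _] := Hnm p0 p0Q nm.
    by case/and3P: (Hd p0 p0Q) => _ _ /eqP ->.
- move=> f; rewrite !inE => /andP[nf /andP[ef /eqP fv]].
  case: f nf ef fv => x y /= nf exy fv; subst y.
  have xu : x != u by apply: contraNneq nf => ->.
  move=> p /and3P[pp up /eqP lp]; apply/negPn/negP => nS.
  have nSp : ~~ has (mem S) p by move: nS; rewrite /= negb_or => /andP[].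
  case: (boolP (w \in p)) => wp.
    have hw : has (pred1 w) p by apply/hasP; exists w => //=.
    have [p1 [w' [p2 [Ep /eqP Ew' np1]]]] := split_first hw; subst w'.
    have wp1 : w \notin p1 by apply: contra np1 => H; apply/hasP; exists w => //=.
    move: pp; rewrite Ep cat_path => /andP[pp1 /= /andP[etw _]].
    have nSp1 : ~~ has (mem S) p1.
      by apply: contra nSp => /hasZP [z zp zS]; apply/hasZP; exists z; rewrite // Ep mem_cat zp.
    have tR := path_R pp1 (S3S p1 nSp1 wp1).
    case: (boolP b) => bb.
      by case/negP: nSp; apply/hasZP; exists w => //; apply: wS.
    by have := Hnb bb _ tR; rewrite etw.
  have xR := path_R pp (S3S p nSp wp).
  rewrite lp in xR.
  by have := noX xR exy; move/eqP; rewrite (negbTE xu).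
- have [y /mapP[a aM Ea] Ey] := mapP (coverSv v (setU11 v Z)).
  have [s1 [Ef [_ ns1 ws1 pp]]] := HM a aM.
  exists (fanp a).
    by rewrite /Fan /L map_cat mem_cat; apply/orP; left; apply: map_f.
  rewrite Ef /term_edge belast_rcons last_rcons /= -Ea -Ey.
  move: pp; rewrite rcons_path => /andP[pp1 eyv].
  have yR := path_R pp1 (SvS3 s1 ns1 ws1).
  by rewrite -Ea -Ey in eyv; rewrite (noX yR eyv).
Qed.

End WithZ.

End E.
Import E.

Theorem lemma4p10 (V : finType) (e : rel V) (r w : V) (I : {set V * V})
    (u v : V) :
  loopless e ->
  w != r ->
  in_G e r w I ->
  (forall f, f \in in_edges e w :\: I -> in_G e r w (I :|: [set f])) ->
  (u, v) \in edges e -> u != r -> v != w ->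
  ~ in_G (del_edge e u v) r w I ->
  exists (S : {set V}) (Ps : seq (seq V)),
    [/\ r \notin S /\ v \in S,
        rS_path_system e r S Ps, Vplus r Ps = S,
        (forall f, f \in in_edges e v :\: [set (u, v)] -> separates e r S f.1) &
        exists2 p, p \in Ps & term_edge r p = (u, v)].
Proof.
move=> Hl Hwr HI HIf Huv Hur Hvw Hn.
have HIin := HI.1.
have [Z [sepZ cZ rZ wZ]] := exists_Z Hl Hwr Hur Hvw HIin Hn.
case: HI => _ [Qs [HQ HE]].
have [s2 [W2p W2B W2Z vr]] := exists_W2 Hl Hwr Hur Hvw HIin sepZ cZ HQ HE.
have Bld := build Hwr Hur Hvw HIin sepZ cZ rZ wZ W2p W2B W2Z vr.
have cIB := card_I r HIin.
case: (boolP [exists t, (t \in R e r w v Z) && e t w]) => [/existsP [t /andP[tR etw]] | Hno].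
- case: (boolP ((t, w) \in I)) => tI.
    have Etr : t = r by apply: (I_R (Z:=Z) (u:=u)) tR tI.
    subst t.
    apply: (Bld I Qs true (subxx I) HQ HE) => // _.
    by rewrite cIB tI addn1.
  have fin : (t, w) \in in_edges e w :\: I by rewrite !inE tI etw eqxx.
  have [_ [Qs' [HQ' HE']]] := HIf _ fin.
  apply: (Bld _ Qs' true (subsetUl _ _) HQ' HE') => // _.
  rewrite setUC cardsU1 tI cIB /=.
  by case: ((r, w) \in I); rewrite /= ?addn1 ?addn0 // ltnS leqnSn.
- apply: (Bld I Qs false (subxx I) HQ HE) => // _ y yR; apply/negP => eyw.
  by case/negP: Hno; apply/existsP; exists y; rewrite yR eyw.
Qed.
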